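(* Let $E^*$ be an $s$-$t$ path maximizing $\Lambda(\cdot,P)$ over all directed $s$-$t$ paths, with $d$ edges, and let $b=\max_i|E_2\cap p_i|$. If the initial recursion depth satisfies $I\ge\lceil\log d\rceil$, then the Extended Recursive Greedy algorithm returns an $s$-$t$ path $E_{\mathbf{f}}$ with $\Lambda(E_{\mathbf{f}},P)\ge\frac{1}{(b+1)(\lceil\log d\rceil+1)}\Lambda(E^*,P)$. (Logarithms are base 2.)
   Context: $G=(V,E)$ is a simple directed acyclic graph with capacities $C\in\mathbb{R}_{\ge0}^E$, $s,t\in V$ joined by a directed path, budget $0<\gamma\le\min_eC(e)$. User paths $P=\{p_1,\dots,p_k\}$ are directed paths (edge sets, not necessarily disjoint) with initial values $\lambda_i\ge0$, $\sum_{i:e\in p_i}\lambda_i\le C(e)$. For $A\subseteq E$ let $\tilde C_A(e)=C(e)-\gamma\mathbf{1}_{\{e\in A\}}$; $T(A,P)$ is the optimal value of: maximize $\sum_i\tilde\lambda_i$ s.t. $\sum_{i:e\in p_i}\tilde\lambda_i\le\tilde C_A(e)$ for all $e$, $0\le\tilde\lambda_i\le\lambda_i$; $\Lambda(A,P)=\sum_i\lambda_i-T(A,P)$. $E_1$ (resp. $E_2$) is the set of edges on exactly one (resp. at least two) user paths. $\tilde\lambda^{(1)}_{iA}=\min(\lambda_i,\min_{e\in p_i\cap E_1}\tilde C_A(e))$, $\tilde\lambda^{(2)}_{iA}=\tilde\lambda^{(1)}_{iA}\prod_{e\in p_i\cap E_2,\ \tilde C_A(e)\le\sum_{j:e\in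 p_j}\lambda_j}\frac{\tilde C_A(e)}{\sum_{j:e\in p_j}\lambda_j}$, $\bar\Lambda(A,P)=\sum_i\lambda_i-\sum_i\tilde\lambda^{(2)}_{iA}$. Recursive Greedy algorithm for a set function $F$ on $2^E$, with $F_X(A)=F(A\cup X)-F(X)$: $RG(u_1,u_2,X,i)$ lets $S$ be a shortest (fewest edges) $u_1$-$u_2$ path, returns ''infeasible'' if none exists, returns $S$ if $i=0$, and otherwise sets $best:=S$, $r:=F_X(S)$ and for every $v\in V$ computes $Q_1=RG(u_1,v,X,i-1)$, then $Q_2=RG(v,u_2,X\cup Q_1,i-1)$ (skipping $v$ if infeasible), updating $best:=Q_1\cup Q_2$, $r:=F_X(Q_1\cup Q_2)$ whenever $F_X(Q_1\cup Q_2)>r$; it returns $best$. The output is $RG(s,t,\emptyset,I)$. The Extended Recursive Greedy algorithm is this algorithm run with $F=\bar\Lambda(\cdot,P)$. *)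

(* Defs.v *)
From HB Require Import structures.
From mathcomp Require Import all_boot all_order all_algebra.
From mathcomp Require Import classical_sets reals.
Set Implicit Arguments. Unset Strict Implicit. Unset Printing Implicit Defensive.
Import Order.TTheory GRing.Theory Num.Theory.
Local Open Scope ring_scope.

Section Defs.
Variables (V : finType) (g : rel V).

Definition edges : {set V * V} := [set e | g e.1 e.2].

Definition simple_dag : Prop :=
  (forall x, ~~ g x x) /\
  (forall x (p : seq V), path g x p -> last x p = x -> p = [::]).

Definition walk_edges (u : V) (p : seq V) : {set V * V} :=
  [set e in zip (u :: p) p].

Definition is_path (u v : V) (A : {set V * V}) : Prop :=
  exists p : seq V, [/\ path g u p, last u p = v, uniq (u :: p) &
                        A = walk_edges u p].

Definition is_user_path (A : {set V * V}) : Prop :=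
  exists u v, is_path u v A /\ (0 < #|A|)%N.

Variable R : realType.
Variables (C : V * V -> R) (gamma : R).
Variables (k : nat) (P : 'I_k -> {set V * V}) (lam : 'I_k -> R).

Definition Ctil (A : {set V * V}) (e : V * V) : R :=
  C e - gamma * (e \in A)%:R.

Definition lp_feasible (A : {set V * V}) (lt : 'I_k -> R) : Prop :=
  (forall e, e \in edges -> \sum_(i < k | e \in P i) lt i <= Ctil A e) /\
  (forall i, 0 <= lt i <= lam i).

Definition T (A : {set V * V}) : R :=
  sup [set x : R | exists lt, lp_feasible A lt /\ x = \sum_(i < k) lt i].

Definition Lambda (A : {set V * V}) : R := \sum_(i < k) lam i - T A.

Definition npaths (e : V * V) : nat := #|[set i | e \in P i]|.
Definition E1 : {set V * V} := [set e in edges | npaths e == 1%N].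
Definition E2 : {set V * V} := [set e in edges | (2 <= npaths e)%N].

Definition load (e : V * V) : R := \sum_(j < k | e \in P j) lam j.

Definition lam1 (A : {set V * V}) (i : 'I_k) : R :=
  \big[Num.min/lam i]_(e in P i :&: E1) Ctil A e.

Definition lam2 (A : {set V * V}) (i : 'I_k) : R :=
  lam1 A i * \prod_(e in P i :&: E2 | Ctil A e <= load e) (Ctil A e / load e).

Definition Lambda_bar (A : {set V * V}) : R :=
  \sum_(i < k) lam i - \sum_(i < k) lam2 A i.

Definition bmax : nat := \max_(i < k) #|E2 :&: P i|.

End Defs.

Section RG.
Variables (V : finType) (R : realType).
Variable F : {set V * V} -> R.
(* sp u1 u2 : the chosen shortest u1-u2 path (None if none exists). *)
Variable sp : V -> V -> option {set V * V}.
(* the order in which "for every v in V" is iterated *)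
Variable ord : seq V.

Definition FX (X A : {set V * V}) : R := F (A :|: X) - F X.

Fixpoint RG (i : nat) (u1 u2 : V) (X : {set V * V}) : option {set V * V} :=
  match sp u1 u2 with
  | None => None
  | Some S0 =>
    match i with
    | 0%N => Some S0
    | i'.+1 =>
      Some (foldl (fun best v =>
        match RG i' u1 v X with
        | None => best
        | Some Q1 =>
          match RG i' v u2 (X :|: Q1) with
          | None => best
          | Some Q2 =>
              if FX X best < FX X (Q1 :|: Q2) then Q1 :|: Q2 else best
          end
        end) S0 ord)
    end
  end.
End RG.

Definition shortest_path_oracle (V : finType) (g : rel V)
    (sp : V -> V -> option {set V * V}) : Prop :=
  forall u v, match sp u v with
              | Some S0 => is_path g u v S0 /\
                          (forall S', is_path g u v S' -> (#|S0| <= #|S'|)%N)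
              | None => forall S1, ~ is_path g u v S1
              end.

(* Main.v *)
Require Import Defs.
From HB Require Import structures.
From mathcomp Require Import all_boot all_order all_algebra.
From mathcomp Require Import classical_sets reals.
Import Order.TTheory GRing.Theory Num.Theory.
Local Open Scope ring_scope.
From mathcomp Require Import ring lra.
From mathcomp Require Import fintype finset.

Set Implicit Arguments. Unset Strict Implicit.

Lemma walk_nil (V : finType) (u : V) : walk_edges u [::] = finset.set0.
Proof. by apply/setP=> e; rewrite !inE. Qed.

Lemma walk_cons (V : finType) (u x : V) p :
  walk_edges u (x :: p) = (u, x) |: walk_edges x p.
Proof. by apply/setP=> e; rewrite !inE. Qed.

Lemma walk_cat (V : finType) (u : V) p1 p2 :
  walk_edges u (p1 ++ p2) = walk_edges u p1 :|: walk_edges (last u p1) p2.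
Proof.
elim: p1 u => [|x p1 IH] u /=; first by rewrite walk_nil set0U.
by rewrite !walk_cons IH setUA.
Qed.

Lemma walk_mem (V : finType) (u : V) p e :
  e \in walk_edges u p -> (e.1 \in u :: p) && (e.2 \in p).
Proof.
elim: p u => [|x p IH] u; first by rewrite walk_nil inE.
rewrite walk_cons in_setU1 => /orP[/eqP -> /=|/IH]; first by rewrite !inE !eqxx.
rewrite !inE => /andP[/orP[->|->] ->]; rewrite ?orbT //.
Qed.

Lemma walk_card (V : finType) (u : V) p :
  uniq (u :: p) -> #|walk_edges u p| = size p.
Proof.
elim: p u => [|x p IH] u /=; first by rewrite walk_nil cards0.
move=> /and3P[Hu Hx Hp]; rewrite walk_cons cardsU1 IH /= ?Hx //.
case: (boolP ((u, x) \in walk_edges x p)) => // /walk_mem /andP[/= H _].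
by rewrite H in Hu.
Qed.

Lemma suffix_path (V : finType) (g : rel V) (u x : V) p :
  x \in u :: p -> path g u p -> exists q, path g x q /\ last x q = last u p.
Proof.
elim: p u => [|y p IH] u.
  by rewrite inE => /eqP -> _; exists [::].
rewrite inE => /orP[/eqP ->|Hx] Hp; first by exists (y :: p).
by move: Hp => /= /andP[_ Hp]; apply: IH.
Qed.

Lemma prefix_path (V : finType) (g : rel V) (v x : V) p :
  x \in p -> path g v p -> exists q, [/\ q != [::], path g v q & last v q = x].
Proof.
elim: p v => [|y p IH] v //.
rewrite inE => /orP[/eqP ->|Hx] /= /andP[Hvy Hp].
  by exists [:: y]; rewrite /= Hvy.
have [q [Hq1 Hq2 Hq3]] := IH y Hx Hp.
by exists (y :: q); rewrite /= Hvy Hq2 Hq3.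
Qed.

Lemma cat_uniq_dag (V : finType) (g : rel V) (u : V) p1 p2 :
  simple_dag g -> path g u p1 -> path g (last u p1) p2 ->
  uniq (u :: p1) -> uniq (last u p1 :: p2) -> uniq (u :: p1 ++ p2).
Proof.
move=> [_ Hdag] Hp1 Hp2 U1 U2.
rewrite -cat_cons cat_uniq U1 /=; move: U2 => /= /andP[_ ->]; rewrite andbT.
apply/hasPn => x Hx2; apply/negP => Hx1.
have [q1 [Hq1 Lq1]] := suffix_path Hx1 Hp1.
have [q2 [Nq2 Hq2 Lq2]] := prefix_path Hx2 Hp2.
have := Hdag x (q1 ++ q2); rewrite cat_path Hq1 Lq1 Hq2 last_cat Lq1 Lq2.
move=> /(_ isT erefl); case: q1 {Hq1 Lq1} => // Hq.
by move: Hq Nq2 => /= ->.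
Qed.

Lemma is_path_cat (V : finType) (g : rel V) u v w A B :
  simple_dag g -> is_path g u v A -> is_path g v w B -> is_path g u w (A :|: B).
Proof.
move=> Hd [p1 [Hp1 L1 U1 ->]] [p2 [Hp2 L2 U2 ->]].
exists (p1 ++ p2); split.
- by rewrite cat_path Hp1 L1 Hp2.
- by rewrite last_cat L1.
- by apply: (cat_uniq_dag Hd) => //; rewrite ?L1.
- by rewrite walk_cat L1.
Qed.

Lemma is_path_split (V : finType) (g : rel V) u w A m :
  is_path g u w A -> exists v A1 A2, [/\ is_path g u v A1, is_path g v w A2,
     A = A1 :|: A2, #|A1| = minn m #|A| & #|A2| = (#|A| - m)%N].
Proof.
move=> [p [Hp L U ->]].
have Hc := walk_card U.
set p1 := take m p; set p2 := drop m p.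
have Ep : p = p1 ++ p2 by rewrite cat_take_drop.
exists (last u p1), (walk_edges u p1), (walk_edges (last u p1) p2).
have /andP[Hp1 Hp2] : path g u p1 && path g (last u p1) p2 by rewrite -cat_path -Ep.
have L' : last (last u p1) p2 = w by rewrite -last_cat -Ep.
have /and3P[U1 Hn U2] : [&& uniq (u :: p1), ~~ has (mem (u :: p1)) p2 & uniq p2].
  by rewrite -cat_uniq cat_cons -Ep.
have U2' : uniq (last u p1 :: p2).
  rewrite /= U2 andbT; apply/negP => Hin; move/hasPn: Hn => /(_ _ Hin).
  by rewrite /= mem_last.
split.
- by exists p1.
- by exists p2.
- by rewrite {1}Ep walk_cat.
- by rewrite walk_card // size_take Hc.
- by rewrite walk_card // size_drop Hc.
Qed.

Lemma foldl_inv (T S : Type) (f : T -> S -> T) (Pr : T -> Prop) b s :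
  Pr b -> (forall b v, Pr b -> Pr (f b v)) -> Pr (foldl f b s).
Proof. by elim: s b => [|x s IH] b //= Hb Hf; apply: IH => //; apply: Hf. Qed.

Lemma foldl_ge (T S : Type) (R : realType) (f : T -> S -> T) (h : T -> R) b s :
  (forall b v, h b <= h (f b v)) -> h b <= h (foldl f b s).
Proof.
move=> Hf; apply: (@foldl_inv _ _ f (fun b' => h b <= h b')) => // b' v H.
exact: le_trans H (Hf _ _).
Qed.

Lemma foldl_cand (T : Type) (S : eqType) (R : realType) (f : T -> S -> T)
   (h : T -> R) (c : S -> T -> Prop) b s v :
  (forall b v, h b <= h (f b v)) -> (forall b v x, c v x -> h x <= h (f b v)) ->
  v \in s -> forall x, c v x -> h x <= h (foldl f b s).
Proof.
move=> Hf Hc; elim: s b => [|y s IH] b //=; rewrite inE => /orP[/eqP ->|Hv] x Hx.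
  apply: le_trans (Hc b y x Hx) _; exact: foldl_ge.
exact: IH.
Qed.

Lemma RG_some (V : finType) (R : realType) F sp ord i (u1 u2 : V) X S0 :
  sp u1 u2 = Some S0 -> exists Q, RG (R:=R) F sp ord i u1 u2 X = Some Q.
Proof. by case: i => [|i] /= ->; eexists. Qed.

Lemma RG_path (V : finType) (g : rel V) (R : realType) F sp ord :
  simple_dag g -> shortest_path_oracle g sp ->
  forall i (u1 u2 : V) X Q, RG (R:=R) F sp ord i u1 u2 X = Some Q -> is_path g u1 u2 Q.
Proof.
move=> Hd Hsp; elim=> [|i IH] u1 u2 X Q /=; have := Hsp u1 u2;
  case: (sp u1 u2) => // S0 [HS0 _] [<-] //.
apply: foldl_inv => // b v Hb.
case E1: (RG F sp ord i u1 v X) => [Q1|] //.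
case E2: (RG F sp ord i v u2 (X :|: Q1)) => [Q2|] //.
case: ifP => // _; apply: (is_path_cat Hd); [exact: IH E1 | exact: IH E2].
Qed.

Lemma path_base (V : finType) (g : rel V) (u1 u2 : V) Ps S0 :
  is_path g u1 u2 Ps -> (#|Ps| <= 1)%N -> is_path g u1 u2 S0 -> (#|S0| <= #|Ps|)%N ->
  S0 = Ps.
Proof.
move=> [p [Hp Lp Up ->]] Hs [q [Hq Lq Uq ->]].
rewrite (walk_card Up) (walk_card Uq) in Hs *.
case: p Hp Lp Up Hs => [|x [|y p]] //= Hp Lp Up _.
  by case: q Hq Lq Uq => //.
case: q Hq Lq Uq => [|z [|y q]] //= Hq Lq Uq _.
  by move: Up; rewrite Lq Lp inE eqxx.
by rewrite Lp Lq.
Qed.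

Lemma RG_guar (V : finType) (g : rel V) (R : realType) (F : {set V * V} -> R) sp (ord : seq V) :
  simple_dag g -> shortest_path_oracle g sp -> (forall v, v \in ord) ->
  (forall A B : {set V * V}, A \subset B -> F A <= F B) ->
  (forall X Y S : {set V * V}, X \subset Y -> F (S :|: Y) - F Y <= F (S :|: X) - F X) ->
  forall i j, (j <= i)%N -> forall (u1 u2 : V) X Ps, is_path g u1 u2 Ps ->
  (#|Ps| <= 2 ^ j)%N ->
  exists Q, RG F sp ord i u1 u2 X = Some Q /\
            FX F X Ps <= (j.+1)%:R * FX F X Q.
Proof.
move=> Hd Hsp Hord Fmono Fsub.
have FXge0 : forall X A, 0 <= FX F X A.
  by move=> X A; rewrite /FX subr_ge0; apply: Fmono; apply: subsetUr.
have body_ge : forall i u1 u2 X b v,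
  FX F X b <= FX F X ((fun best v =>
        match RG F sp ord i u1 v X with
        | None => best
        | Some Q1 =>
          match RG F sp ord i v u2 (X :|: Q1) with
          | None => best
          | Some Q2 =>
              if FX F X best < FX F X (Q1 :|: Q2) then Q1 :|: Q2 else best
          end
        end) b v).
  move=> i u1 u2 X b v /=.
  case: (RG F sp ord i u1 v X) => [Q1|] //.
  case: (RG F sp ord i v u2 (X :|: Q1)) => [Q2|] //.
  by case: ifP => // /ltW.
elim=> [|i IH] j Hj u1 u2 X Ps HPs HsP.
  move: Hj; rewrite leqn0 => /eqP Hj; subst j.
  have := Hsp u1 u2; rewrite /=; case: (sp u1 u2) => [S0 [HS0 Hmin]|]; last first.
    by move=> /(_ Ps).
  exists S0; split => //.
  by rewrite (path_base HPs HsP HS0 (Hmin _ HPs)) mul1r.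
have := Hsp u1 u2; rewrite /=; case E: (sp u1 u2) => [S0|]; last first.
  by move=> /(_ Ps).
move=> [HS0 Hmin].
eexists; split; first reflexivity.
case: j Hj HsP => [|j] Hj HsP.
  rewrite mul1r -(path_base HPs HsP HS0 (Hmin _ HPs)).
  exact: foldl_ge (body_ge i u1 u2 X).
have [v [A1 [A2 [H1 H2 EA C1 C2]]]] := is_path_split (2 ^ j) HPs.
have HA1 : (#|A1| <= 2 ^ j)%N by rewrite C1 geq_minl.
have HA2 : (#|A2| <= 2 ^ j)%N by rewrite C2 leq_subLR addnn -mul2n -expnS.
have Hji : (j <= i)%N by [].
have [Q1 [E1 HQ1]] := IH j Hji u1 v X A1 H1 HA1.
have [Q2 [E2 HQ2]] := IH j Hji v u2 (X :|: Q1) A2 H2 HA2.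
have Hc := @foldl_cand _ _ _ _ (FX F X) (fun v' x => v' = v /\ x = Q1 :|: Q2) S0 ord v
  (body_ge i u1 u2 X).
have {Hc} Hc := Hc _ (Hord v) (Q1 :|: Q2) (conj erefl erefl).
apply: le_trans _ (_ : _ <= (j.+2)%:R * FX F X (Q1 :|: Q2)) _; last first.
  apply: ler_wpM2l; first by [].
  apply: Hc => b v' x [-> ->] /=; rewrite E1 E2.
  by case: ifP => // /negbT; rewrite -leNgt.
move: HQ1 HQ2; rewrite /FX.
have eA : Ps :|: (X :|: Q1) = A2 :|: (A1 :|: (X :|: Q1)).
  by rewrite EA; apply/setP=> x; rewrite !inE; do ! case: (_ \in _).
have eB : (Q1 :|: Q2) :|: X = Q2 :|: (X :|: Q1).
  by apply/setP=> x; rewrite !inE; do ! case: (_ \in _).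
have eC : Q1 :|: X = X :|: Q1 by rewrite setUC.
have f0 : F (Ps :|: X) <= F (Ps :|: (X :|: Q1)).
  by apply: Fmono; apply: setUS; apply: subsetUl.
have f1 := Fsub (X :|: Q1) (A1 :|: (X :|: Q1)) A2 (subsetUr _ _).
have f2 := Fsub X (X :|: Q1) A1 (subsetUl _ _).
have f3 : F (X :|: Q1) <= F (Q2 :|: (X :|: Q1)) by apply: Fmono; apply: subsetUr.
have f4 : F X <= F (X :|: Q1) by apply: Fmono; apply: subsetUl.
rewrite eB eC => HQ1 HQ2.
rewrite -eA in f1.
have -> : (j.+2)%:R = (j.+1)%:R + 1 :> R by rewrite -addn1 natrD.
have n0 : 0 <= (j.+1)%:R :> R by [].
move: (j.+1)%:R n0 HQ1 HQ2 => n n0 HQ1 HQ2.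
nra.
Qed.

Definition good (T : finType) (R : realType) (h : {set T} -> R) :=
  [/\ forall A, 0 <= h A,
      forall X Y : {set T}, X \subset Y -> h Y <= h X &
      forall X Y S : {set T}, X \subset Y -> h Y - h (S :|: Y) <= h X - h (S :|: X)].

Lemma good_ext (T : finType) (R : realType) (h h' : {set T} -> R) :
  (forall A, h A = h' A) -> good h -> good h'.
Proof.
move=> E [H1 H2 H3]; split=> *; rewrite -!E; [exact: H1|exact: H2|exact: H3].
Qed.

Lemma good_const1 (T : finType) (R : realType) : good (fun _ : {set T} => 1 : R).
Proof. by split=> *; rewrite ?subrr. Qed.

Lemma good_mul (T : finType) (R : realType) (h1 h2 : {set T} -> R) :
  good h1 -> good h2 -> good (fun A => h1 A * h2 A).
Proof.
move=> [a1 b1 c1] [a2 b2 c2]; split.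
- by move=> A; apply: mulr_ge0.
- by move=> X Y H; apply: ler_pM; auto.
move=> X Y S H.
have HS : S :|: X \subset S :|: Y by apply: setUS.
have := c1 X Y S H; have := c2 X Y S H.
have := b1 _ _ H; have := b2 _ _ H; have := b1 _ _ HS; have := b2 _ _ HS.
have := b1 Y (S :|: Y) (subsetUr _ _); have := b2 Y (S :|: Y) (subsetUr _ _).
have := a1 Y; have := a2 Y; have := a1 (S :|: Y); have := a2 (S :|: Y).
have := a1 X; have := a2 X; have := a1 (S :|: X); have := a2 (S :|: X).
nra.
Qed.

Lemma good_prod (T : finType) (R : realType) (I : Type) (r : seq I) (Pp : pred I)
   (hs : I -> {set T} -> R) :
  (forall e, Pp e -> good (hs e)) -> good (fun A => \prod_(e <- r | Pp e) hs e A).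
Proof.
move=> H; elim: r => [|x r IH].
  by apply: good_ext (good_const1 _ _) => A; rewrite big_nil.
case Hx: (Pp x).
  apply: good_ext (good_mul (H x Hx) IH) => A; by rewrite big_cons Hx.
by apply: good_ext IH => A; rewrite big_cons Hx.
Qed.

Lemma good_ind (T : finType) (R : realType) (e : T) (a : R) :
  0 <= a <= 1 -> good (fun A => if e \in A then a else 1).
Proof.
move=> /andP[a0 a1]; split.
- by move=> A; case: ifP.
- move=> X Y /subsetP H; case eX: (e \in X); first by rewrite (H _ eX).
  by case: ifP.
move=> X Y S /subsetP H; rewrite !inE.
case eX: (e \in X); first by rewrite (H _ eX) /= !orbT subrr.
case eY: (e \in Y); rewrite ?orbT ?orbF /=; last by rewrite lexx.
by rewrite subrr; case: ifP; lra.
Qed.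

Section LB.
Variables (V : finType) (g : rel V) (R : realType) (C : V * V -> R) (gamma : R).
Variables (k : nat) (P : 'I_k -> {set V * V}) (lam : 'I_k -> R).
Hypothesis Hg : 0 < gamma.
Hypothesis HgC : forall e, e \in edges g -> gamma <= C e.
Hypothesis Hlam : forall i, 0 <= lam i.
Hypothesis Hload : forall e, e \in edges g -> load P lam e <= C e.

Local Notation Ct := (Ctil C gamma).
Local Notation ld := (load P lam).

Definition fe A e := if Ct A e <= ld e then Ct A e / ld e else 1.

Lemma Ct_ge0 A e : e \in edges g -> 0 <= Ct A e.
Proof. move=> /HgC H; rewrite /Ctil; case: (e \in A); rewrite /= ?mulr1 ?mulr0. lra. have := Hg. lra. Qed.

Lemma Ct_U S A e : Ct (S :|: A) e = Num.min (Ct S e) (Ct A e).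
Proof.
rewrite /Ctil inE; have g0 := ltW Hg.
case: (e \in S); case: (e \in A) => /=; rewrite ?mulr1 ?mulr0 ?minxx //.
  by case: leP => //; lra.
by case: leP => //; lra.
Qed.

Lemma ld_ge0 e : 0 <= ld e.
Proof. by apply: sumr_ge0 => i _. Qed.

Lemma fe01 A e : e \in edges g -> 0 <= fe A e <= 1.
Proof.
move=> He; have := Ct_ge0 A He; have := ld_ge0 e; rewrite /fe.
case: ifP => // H c0 l0; last by rewrite ler01 lexx.
have [->|ln0] := eqVneq (ld e) 0; first by rewrite invr0 mulr0 lexx ler01.
have lp : 0 < ld e by rewrite lt_def ln0.
by rewrite divr_ge0 //= ler_pdivrMr // mul1r.
Qed.

Lemma fe_ind A e : e \in edges g -> fe A e = if e \in A then fe [set e] e else 1.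
Proof.
move=> He; rewrite /fe /Ctil in_set1 eqxx.
case: (e \in A) => //; rewrite mulr0 subr0.
case: ifP => // H; have := Hload He; have := HgC He => h1 h2.
have -> : ld e = C e by apply/eqP; rewrite eq_le H h2.
by rewrite divff //; apply/eqP => h; rewrite h in h1; have := Hg; lra.
Qed.

Lemma E1_edges e : e \in E1 g P -> e \in edges g.
Proof. by rewrite inE => /andP[]. Qed.
Lemma E2_edges e : e \in E2 g P -> e \in edges g.
Proof. by rewrite inE => /andP[]. Qed.

Local Notation l1 := (lam1 g C gamma P lam).
Local Notation l2 := (lam2 g C gamma P lam).

Lemma lam1_U S A i : l1 (S :|: A) i = Num.min (l1 S i) (l1 A i).
Proof.
apply: (big_rec3 (fun y1 y2 y3 => y1 = Num.min y2 y3)); first by rewrite minxx.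
by move=> e y1 y2 y3 _ ->; rewrite Ct_U minACA.
Qed.

Lemma lam1_ge0 A i : 0 <= l1 A i.
Proof.
apply: (big_ind (fun y => 0 <= y)); [exact: Hlam | by move=> x y hx hy; rewrite le_min hx hy | ].
by move=> e; rewrite inE => /andP[_ /E1_edges]; apply: Ct_ge0.
Qed.

Lemma lam1_le A i : l1 A i <= lam i.
Proof.
apply: (big_rec (fun y => y <= lam i)) => // e y _ hy.
by apply: le_trans hy; rewrite ge_min lexx orbT.
Qed.

Lemma good_lam1 i : good (fun A => l1 A i).
Proof.
split.
- by move=> A; apply: lam1_ge0.
- by move=> X Y H; rewrite -(setUidPr H) lam1_U ge_min lexx.
move=> X Y S H; rewrite !lam1_U.
have : l1 Y i <= l1 X i by rewrite -(setUidPr H) lam1_U ge_min lexx.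
by case: (leP (l1 S i) (l1 Y i)); case: (leP (l1 S i) (l1 X i)); lra.
Qed.

Lemma lam2E A i : l2 A i = l1 A i * \prod_(e in P i :&: E2 g P) fe A e.
Proof. by rewrite /lam2 big_mkcondr. Qed.

Lemma good_lam2 i : good (fun A => l2 A i).
Proof.
apply: good_ext (fun A => esym (lam2E A i)) _.
apply: good_mul; first exact: good_lam1.
apply: good_prod => e; rewrite inE => /andP[_ /E2_edges He].
apply: good_ext (fun A => esym (fe_ind A He)) _.
exact: good_ind (fe01 _ He).
Qed.

Local Notation LB := (Lambda_bar g C gamma P lam).

Lemma LB_mono (X Y : {set V * V}) : X \subset Y -> LB X <= LB Y.
Proof.
move=> H; rewrite /Lambda_bar; apply: lerB => //; apply: ler_sum => i _.
by have [_ h _] := good_lam2 i; apply: h.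
Qed.

Lemma LB_sub (X Y S : {set V * V}) : X \subset Y -> LB (S :|: Y) - LB Y <= LB (S :|: X) - LB X.
Proof.
move=> H; rewrite /Lambda_bar.
have E : forall a x y : R, a - x - (a - y) = y - x by move=> a x y; ring.
rewrite !E -!sumrB; apply: ler_sum => i _.
by have [_ _ h] := good_lam2 i; apply: h.
Qed.


Lemma bigmin_le (I : eqType) (x : R) (r : seq I) (Pp : pred I) (F : I -> R) e :
  e \in r -> Pp e -> \big[Num.min/x]_(j <- r | Pp j) F j <= F e.
Proof.
elim: r => [|y r IH] //; rewrite inE big_cons => /orP[/eqP ->|Hr] He.
  by rewrite He ge_min lexx.
case: ifP => _; last exact: IH.
by rewrite ge_min IH ?orbT.
Qed.

Lemma one_minus_prod (I : Type) (r : seq I) (Pp : pred I) (F : I -> R) :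
  (forall i, Pp i -> 0 <= F i <= 1) ->
  0 <= \prod_(i <- r | Pp i) F i <= 1 /\
  1 - \prod_(i <- r | Pp i) F i <= \sum_(i <- r | Pp i) (1 - F i).
Proof.
move=> HF.
apply: (big_rec2 (fun p s => 0 <= p <= 1 /\ 1 - p <= s)).
  by rewrite ler01 lexx subrr.
move=> i p s Hi [/andP[p0 p1] hs]; have /andP[f0 f1] := HF i Hi.
split; first by apply/andP; split; [apply: mulr_ge0 | nra].
nra.
Qed.

Lemma sum_npaths1 e (f : 'I_k -> R) : npaths P e = 1%N ->
  exists i0, [/\ e \in P i0, (forall j, e \in P j -> j = i0) &
     \sum_(i < k | e \in P i) f i = f i0].
Proof.
move=> /eqP /cards1P [i0 Hs].
have Hm : forall j, (e \in P j) = (j == i0).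
  by move=> j; have /setP /(_ j) := Hs; rewrite !inE.
exists i0; split.
- by rewrite Hm.
- by move=> j; rewrite Hm => /eqP.
- by rewrite (eq_bigl (fun j => j == i0)) ?big_pred1_eq // => j; rewrite Hm.
Qed.

Lemma sum_npaths0 e (f : 'I_k -> R) : npaths P e = 0%N ->
  \sum_(i < k | e \in P i) f i = 0.
Proof.
move=> /cards0_eq Hs; apply: big_pred0 => j.
by have /setP /(_ j) := Hs; rewrite !inE.
Qed.

Lemma l2_le_fe A i e : e \in P i -> e \in E2 g P -> l2 A i <= lam i * fe A e.
Proof.
move=> H1 H2; rewrite lam2E.
have He : e \in P i :&: E2 g P by rewrite inE H1 H2.
rewrite (bigD1 e He) /=.
have F01 : forall e', e' \in P i :&: E2 g P -> 0 <= fe A e' <= 1.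
  by move=> e'; rewrite inE => /andP[_ /E2_edges]; apply: fe01.
have [/andP[q0 q1] _] := @one_minus_prod _ (index_enum _) (fun e' => (e' \in P i :&: E2 g P) && (e' != e)) (fe A)
   (fun e' => fun h => F01 e' (proj1 (andP h))).
have /andP[f0 f1] := F01 e He.
apply: le_trans (_ : l1 A i * fe A e <= _).
  apply: ler_wpM2l; first exact: lam1_ge0.
  by rewrite -{2}(mulr1 (fe A e)); apply: ler_wpM2l.
by apply: ler_wpM2r => //; apply: lam1_le.
Qed.

Lemma l2_le A i : 0 <= l2 A i <= lam i.
Proof.
have [h _ _] := good_lam2 i; rewrite h /= lam2E.
have [/andP[q0 q1] _] := @one_minus_prod _ (index_enum _) (fun e' => e' \in P i :&: E2 g P) (fe A)
   (fun e' => fun h => fe01 A (E2_edges (proj2 (andP (eqbLR (in_setI _ _ _) h))))).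
have := lam1_ge0 A i; have := lam1_le A i; nra.
Qed.

Lemma feas_l2 A : lp_feasible g C gamma P lam A (l2 A).
Proof.
split; last by move=> i; apply: l2_le.
move=> e He.
case: (ltngtP (npaths P e) 1) => Hn.
- have Hn0 : npaths P e = 0%N by move: Hn; case: (npaths P e).
  by rewrite sum_npaths0 // Ct_ge0.
- have HE2 : e \in E2 g P by rewrite /E2 in_set He.
  apply: le_trans (_ : \sum_(i < k | e \in P i) lam i * fe A e <= _).
    by apply: ler_sum => i Hi; apply: l2_le_fe.
  rewrite -mulr_suml -/(load P lam e) /fe.
  case: ifP => H; last by rewrite mulr1; move/negbT: H; rewrite -ltNge => /ltW.
  have [->|ln0] := eqVneq (ld e) 0; first by rewrite mul0r Ct_ge0.
  by rewrite mulrC divfK.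
- have [i0 [H1 _ ->]] := sum_npaths1 (l2 A) Hn.
  have HE1 : e \in P i0 :&: E1 g P by rewrite in_setI H1 /E1 in_set He Hn.
  apply: le_trans (_ : l1 A i0 <= _).
    rewrite lam2E; have := lam1_ge0 A i0.
    have [/andP[q0 q1] _] := @one_minus_prod _ (index_enum _) (fun e' => e' \in P i0 :&: E2 g P) (fe A)
      (fun e' => fun h => fe01 A (E2_edges (proj2 (andP (eqbLR (in_setI _ _ _) h))))).
    nra.
  exact: bigmin_le (mem_index_enum _) HE1.
Qed.

Lemma exch (a : 'I_k -> R) (w : V * V -> R) :
  \sum_(i < k) a i * \sum_(e in P i :&: E2 g P) w e =
  \sum_(e in E2 g P) w e * \sum_(i < k | e \in P i) a i.
Proof.
under eq_bigr do rewrite mulr_sumr big_mkcond.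
have -> : \sum_(e in E2 g P) w e * \sum_(i < k | e \in P i) a i =
  \sum_(e in E2 g P) \sum_(i < k) (if e \in P i then w e * a i else 0).
  by apply: eq_bigr => e _; rewrite mulr_sumr big_mkcond.
rewrite exchange_big [RHS]big_mkcond; apply: eq_bigr => e _ /=.
case HE: (e \in E2 g P).
  by apply: eq_bigr => i _; rewrite in_setI HE andbT; case: (e \in P i) => //; rewrite mulrC.
by rewrite big1 // => i _; rewrite in_setI HE andbF.
Qed.

Lemma key_bound A (lt : 'I_k -> R) : lp_feasible g C gamma P lam A lt ->
  \sum_(i < k) lam i - \sum_(i < k) l2 A i <=
  ((bmax g P)%:R + 1) * (\sum_(i < k) lam i - \sum_(i < k) lt i).
Proof.
move=> [Hf Hb].
set r := fun i => lam i - lt i.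
have r0 : forall i, 0 <= r i by move=> i; have /andP[_ h] := Hb i; rewrite /r subr_ge0.
have H1 : forall i, lt i <= l1 A i.
  move=> i; apply: (big_rec (fun y => lt i <= y)); first by case/andP: (Hb i).
  move=> e y; rewrite in_setI /E1 in_set => /and3P[HeP He /eqP Hn] hy.
  rewrite le_min hy andbT.
  have [i0 [_ Hu Hs]] := sum_npaths1 lt Hn.
  by move: (Hf e He); rewrite Hs -(Hu i HeP).
have H2 : forall e, e \in E2 g P -> (1 - fe A e) * ld e <= \sum_(i < k | e \in P i) r i.
  move=> e; rewrite /E2 in_set => /andP[He _].
  have s0 : 0 <= \sum_(i < k | e \in P i) r i by apply: sumr_ge0 => i _; apply: r0.
  have := Hf e He; move: s0; rewrite /r sumrB -/(load P lam e) /fe => s0 hs.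
  case: ifP => H; last by rewrite subrr mul0r.
  have [E0|ln0] := eqVneq (ld e) 0; first (rewrite E0 mulr0; move: s0; rewrite E0; done).
  rewrite mulrBl mul1r divfK //; lra.
have H3 : forall i, lam i - l2 A i <= (lam i - l1 A i) +
            lam i * \sum_(e in P i :&: E2 g P) (1 - fe A e).
  move=> i; rewrite lam2E.
  have [/andP[q0 q1] hq] := @one_minus_prod _ (index_enum _)
      (fun e' => e' \in P i :&: E2 g P) (fe A)
      (fun e' => fun h => fe01 A (E2_edges (proj2 (andP (eqbLR (in_setI _ _ _) h))))).
  have := lam1_ge0 A i; have := lam1_le A i; have := Hlam i.
  set q := \prod_(_ in _) _ in q0 q1 hq *; set s := \sum_(_ in _) _ in hq *.
  move=> h0 h1 h2.
  have := mulr_ge0 (h0 : 0 <= lam i) (_ : 0 <= s - (1 - q)); rewrite subr_ge0 => /(_ hq).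
  have := mulr_ge0 (_ : 0 <= lam i - l1 A i) (_ : 0 <= 1 - q).
  rewrite !subr_ge0 => /(_ h1 q1).
  nra.
have Hb1 : forall i, (#|P i :&: E2 g P| <= bmax g P)%N.
  by move=> i; rewrite setIC /bmax; apply: (@leq_bigmax _ (fun j => #|E2 g P :&: P j|)).
rewrite -sumrB.
apply: le_trans (_ : \sum_(i < k) ((lam i - l1 A i) +
            lam i * \sum_(e in P i :&: E2 g P) (1 - fe A e)) <= _).
  by apply: ler_sum => i _; apply: H3.
rewrite big_split /= exch.
have -> : \sum_(i < k) lam i - \sum_(i < k) lt i = \sum_(i < k) r i by rewrite sumrB.
rewrite mulrDl mul1r [X in _ <= X]addrC; apply: lerD.
  by apply: ler_sum => i _; have := H1 i; rewrite /r; lra.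
apply: le_trans (_ : \sum_(e in E2 g P) 1 * \sum_(i < k | e \in P i) r i <= _).
  apply: ler_sum => e He; rewrite mul1r; exact: H2.
rewrite -exch mulr_sumr; apply: ler_sum => i _.
rewrite sumr_const mulrC; apply: ler_wpM2r; first exact: r0.
by rewrite ler_nat.
Qed.

Local Notation Lam := (Lambda g C gamma P lam).

Lemma Lam_bounds A : [/\ 0 <= Lam A, Lam A <= LB A &
   LB A <= ((bmax g P)%:R + 1) * Lam A].
Proof.
pose S : classical_sets.set R := fun x => exists lt, lp_feasible g C gamma P lam A lt /\ x = \sum_(i < k) lt i.
have ne : (S !=set0)%classic by exists (\sum_(i < k) l2 A i); exists (l2 A); split=> //; apply: feas_l2.
have ub : ubound S (\sum_(i < k) lam i).
  move=> x [lt [[_ Hb] ->]]; apply: ler_sum => i _; by case/andP: (Hb i).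
have bp : 0 < (bmax g P)%:R + 1 :> R by rewrite ltr_pwDr.
have ub2 : ubound S (\sum_(i < k) lam i - LB A / ((bmax g P)%:R + 1)).
  move=> x [lt [Hf ->]]; have := key_bound Hf; rewrite /Lambda_bar.
  rewrite -ler_pdivrMl // => H; rewrite lerBrDr addrC -lerBrDr.
  by rewrite mulrC.
have T1 : \sum_(i < k) l2 A i <= T g C gamma P lam A.
  apply: (sup_upper_bound (conj ne (ex_intro _ _ ub))).
  by exists (l2 A); split=> //; apply: feas_l2.
have T2 : T g C gamma P lam A <= \sum_(i < k) lam i by apply: ge_sup.
have T3 : T g C gamma P lam A <= \sum_(i < k) lam i - LB A / ((bmax g P)%:R + 1) := ge_sup ne ub2.
rewrite /Lambda; split.
- by rewrite subr_ge0.
- by rewrite /Lambda_bar lerB.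
rewrite mulrC -ler_pdivrMr //; move: T3; set z := LB A / _; lra.
Qed.

End LB.

Unset Implicit Arguments. Set Strict Implicit.

Theorem theorem2 (V : finType) (g : rel V) (R : realType)
    (C : V * V -> R) (gamma : R) (s t : V)
    (k : nat) (P : 'I_k -> {set V * V}) (lam : 'I_k -> R)
    (sp : V -> V -> option {set V * V}) (ord : seq V) (I : nat)
    (Estar : {set V * V}) :
  simple_dag g ->
  (forall e, e \in edges g -> 0 <= C e) ->
  s != t -> (exists A, is_path g s t A) ->
  0 < gamma -> (forall e, e \in edges g -> gamma <= C e) ->
  (forall i, is_user_path g (P i)) ->
  (forall i, 0 <= lam i) ->
  (forall e, e \in edges g -> load P lam e <= C e) ->
  shortest_path_oracle g sp ->
  perm_eq ord (enum V) ->
  is_path g s t Estar ->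
  (forall A, is_path g s t A ->
     Lambda g C gamma P lam A <= Lambda g C gamma P lam Estar) ->
  (up_log 2 #|Estar| <= I)%N ->
  exists Ef,
    RG (Lambda_bar g C gamma P lam) sp ord I s t (finset.set0 : {set V * V}) = Some Ef /\
    is_path g s t Ef /\
    Lambda g C gamma P lam Estar /
      (((bmax g P)%:R + 1) * ((up_log 2 #|Estar|)%:R + 1))
    <= Lambda g C gamma P lam Ef.
Proof.
move=> Hd _ _ _ Hg HgC _ Hlam Hload Hsp Hperm HE _ HI.
have Hord : forall v, v \in ord by move=> v; rewrite (perm_mem Hperm) mem_enum.
have HsE : (#|Estar| <= 2 ^ up_log 2 #|Estar|)%N by apply: up_logP.
have [Q [EQ HQ]] := RG_guar Hd Hsp Hord (LB_mono Hg HgC Hlam Hload)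
   (LB_sub Hg HgC Hlam Hload) HI finset.set0 HE HsE.
exists Q; split => //; split; first exact: RG_path Hd Hsp _ _ _ _ _ EQ.
move: HQ; rewrite /FX !setU0.
have [a1 a2 a3] := Lam_bounds Hg HgC Hlam Hload Estar.
have [b1 b2 b3] := Lam_bounds Hg HgC Hlam Hload Q.
have [c1 c2 c3] := Lam_bounds Hg HgC Hlam Hload finset.set0.
have e1 : (up_log 2 #|Estar|).+1%:R = (up_log 2 #|Estar|)%:R + 1 :> R by rewrite -addn1 natrD.
rewrite e1.
have n0 : 0 <= (up_log 2 #|Estar|)%:R :> R by [].
have m0 : 0 <= (bmax g P)%:R :> R by [].
move: ((up_log 2 #|Estar|)%:R : R) n0 => n n0.
move: ((bmax g P)%:R : R) m0 a3 b3 c3 => m m0 a3 b3 c3 HQ.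
rewrite ler_pdivrMr; last by apply: mulr_gt0; lra.
nra.
Qed.
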